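(* Let $t_n=n(\log n)^{3/4}$. Then $$\lambda\Big(\#\{i\le n:\beta_i\ge t_n\}\ge 2\ \text{for infinitely many } n\Big)=0.$$
   Context: Let $\lambda$ be Lebesgue measure on $[0,1)$, $\tau(x)=2x\bmod1$, $\chi(x)=\lfloor1/x\rfloor$, $B=[1/2,1)$, $\phi(x)=\inf\{n\in\mathbb N_0:\tau^nx\in B\}+1$, $\tau_Bx=\tau^{\phi(x)}x$ (defined $\lambda$-a.e.), and $\beta_i=\chi\circ\tau_B^{\,i-1}$. Logarithms are natural. *)

(* Defs.v *)
From Stdlib Require Import Reals Lra Lia Classical ClassicalEpsilon.
Open Scope R_scope.

(* Lebesgue-null subsets of R: coverable by countably many open intervals
   of arbitrarily small total length.  lambda(E) = 0 iff E is null. *)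
Definition lebesgue_null (E : R -> Prop) : Prop :=
  forall eps : R, 0 < eps ->
    exists a b : nat -> R,
      (forall k, a k <= b k) /\
      (forall x, E x -> exists k, a k < x < b k) /\
      (forall N, sum_f_R0 (fun k => b k - a k) N <= eps).

Definition tau (x : R) : R := frac_part (2 * x).

Definition chi (x : R) : Z := Int_part (/ x).

Definition B (y : R) : Prop := 1/2 <= y < 1.

(* phi(x) = inf{n >= 0 : tau^n x in B} + 1  (the minimum exists for a.e. x;
   elsewhere an arbitrary value is chosen, on a null set). *)
Definition phi (x : R) : nat :=
  S (epsilon (inhabits 0%nat)
       (fun n => B (Nat.iter n tau x) /\
                 forall m, (m < n)%nat -> ~ B (Nat.iter m tau x))).

Definition tauB (x : R) : R := Nat.iter (phi x) tau x.

Definition beta (i : nat) (x : R) : Z := chi (Nat.iter (i - 1) tauB x).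

Fixpoint count_big (x t : R) (n : nat) : nat :=
  match n with
  | O => O
  | S k => (count_big x t k +
            (if Rle_dec t (IZR (beta (S k) x)) then 1 else 0))%nat
  end.

Definition tn (n : nat) : R := INR n * Rpower (ln (INR n)) (3/4).

(* Main.v *)
Require Import Defs.
From Stdlib Require Import Reals Lra Lia ClassicalEpsilon List.
Open Scope R_scope.

Definition h (k : nat) : R := / 2 ^ k.

Lemma pow2_pos k : 0 < 2 ^ k.
Proof. apply pow_lt; lra. Qed.

Lemma h_pos k : 0 < h k.
Proof. unfold h; apply Rinv_0_lt_compat, pow2_pos. Qed.

Lemma h_S k : h (S k) = h k / 2.
Proof. unfold h; simpl. pose proof (pow2_pos k). field. lra. Qed.

Lemma h_0 : h 0 = 1.
Proof. unfold h; simpl; lra. Qed.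

Lemma h_add a b : h (a + b) = h a * h b.
Proof. unfold h; rewrite pow_add. pose proof (pow2_pos a); pose proof (pow2_pos b).
  field; lra. Qed.

Lemma pow_h a b : (a <= b)%nat -> 2 ^ a * h b = h (b - a).
Proof. intros Hab. replace b with (a + (b - a))%nat at 1 by lia.
  rewrite h_add. unfold h at 1. pose proof (pow2_pos a). field. lra. Qed.

Lemma pow_h_le a b c d : (a + d <= b + c)%nat -> 2 ^ a * h b <= 2 ^ c * h d.
Proof.
  intros H. unfold h.
  pose proof (pow2_pos a); pose proof (pow2_pos b); pose proof (pow2_pos c); pose proof (pow2_pos d).
  assert (E : 2 ^ (a + d) <= 2 ^ (b + c)) by (apply Rle_pow; [lra|lia]).
  rewrite !pow_add in E.
  apply (Rmult_le_reg_r (2 ^ b * 2 ^ d)); [nra|].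
  replace (2 ^ a * / 2 ^ b * (2 ^ b * 2 ^ d)) with (2 ^ a * 2 ^ d) by (field; lra).
  replace (2 ^ c * / 2 ^ d * (2 ^ b * 2 ^ d)) with (2 ^ b * 2 ^ c) by (field; lra).
  lra.
Qed.

Lemma h_le a b : (b <= a)%nat -> h a <= h b.
Proof. intros H. pose proof (pow_h_le 0 a 0 b). simpl in H0. rewrite !Rmult_1_l in H0. apply H0. lia. Qed.

Lemma h_lt a b : (b < a)%nat -> h a < h b.
Proof. intros H. replace a with (S (a - 1)) by lia. rewrite h_S.
  pose proof (h_le (a-1) b ltac:(lia)). pose proof (h_pos (a-1)). lra. Qed.

Lemma h_le_1 k : h k <= 1.
Proof. rewrite <- h_0. apply h_le. lia. Qed.

Lemma Int_part_eq r z : IZR z <= r < IZR z + 1 -> Int_part r = z.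
Proof.
  intros [H1 H2]. unfold Int_part.
  assert (up r = (z + 1)%Z). { symmetry. apply tech_up; rewrite plus_IZR; simpl; lra. }
  rewrite H. lia.
Qed.

Lemma tau_small y : 0 <= y < / 2 -> tau y = 2 * y.
Proof. intros H. unfold tau, frac_part. rewrite (Int_part_eq _ 0). simpl; lra. simpl; lra. Qed.

Lemma tau_big y : / 2 <= y < 1 -> tau y = 2 * y - 1.
Proof. intros H. unfold tau, frac_part. rewrite (Int_part_eq _ 1). simpl; lra. simpl; lra. Qed.

Lemma tau_0 : tau 0 = 0.
Proof. rewrite tau_small; lra. Qed.

Lemma iter_tau_0 n : Nat.iter n tau 0 = 0.
Proof. induction n; simpl; [reflexivity| rewrite IHn; apply tau_0]. Qed.

Lemma tauB_0 : tauB 0 = 0.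
Proof. unfold tauB. apply iter_tau_0. Qed.

Lemma iter_tau_branch j y : h (S j) <= y < h j ->
  forall m, (m <= j)%nat -> Nat.iter m tau y = 2 ^ m * y.
Proof.
  intros Hy. induction m; intros Hm.
  - simpl; lra.
  - rewrite Nat.iter_succ, IHm by lia. rewrite tau_small.
    + simpl; lra.
    + split. { pose proof (pow2_pos m); pose proof (h_pos (S j)). nra. }
      assert (2 ^ m * y < 2 ^ m * h j) by (apply Rmult_lt_compat_l; [apply pow2_pos|lra]).
      rewrite pow_h in H by lia.
      pose proof (h_le (j - m) 1 ltac:(lia)). unfold h at 2 in H0. simpl in H0. lra.
Qed.

Lemma branch_at j y : h (S j) <= y < h j -> / 2 <= 2 ^ j * y < 1.
Proof.
  intros [H1 H2]. pose proof (pow2_pos j).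
  assert (E1 : 2 ^ j * h (S j) = / 2). { rewrite pow_h by lia. replace (S j - j)%nat with 1%nat by lia. unfold h; simpl; lra. }
  assert (E2 : 2 ^ j * h j = 1). { rewrite pow_h by lia. rewrite Nat.sub_diag. apply h_0. }
  split; nra.
Qed.

Lemma phi_branch j y : h (S j) <= y < h j -> phi y = S j.
Proof.
  intros Hy. unfold phi. f_equal.
  set (P := fun n => B (Nat.iter n tau y) /\ forall m, (m < n)%nat -> ~ B (Nat.iter m tau y)).
  assert (PB : forall m, (m < j)%nat -> ~ B (Nat.iter m tau y)).
  { intros m Hm HB. rewrite (iter_tau_branch j y Hy m) in HB by lia.
    unfold B in HB.
    assert (2 ^ m * y < 2 ^ m * h j) by (apply Rmult_lt_compat_l; [apply pow2_pos|lra]).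
    rewrite pow_h in H by lia.
    pose proof (h_le (j - m) 1 ltac:(lia)). unfold h at 2 in H0. simpl in H0. lra. }
  assert (Pj : P j).
  { split. unfold B. rewrite (iter_tau_branch j y Hy j) by lia. pose proof (branch_at j y Hy). lra.
    exact PB. }
  assert (HP : P (epsilon (inhabits 0%nat) P)) by (apply epsilon_spec; exists j; exact Pj).
  destruct HP as [HB Hlt].
  destruct (Nat.lt_total (epsilon (inhabits 0%nat) P) j) as [Hl|[He|Hg]].
  - exfalso. exact (PB _ Hl HB).
  - exact He.
  - exfalso. apply (Hlt j Hg). apply Pj.
Qed.

Lemma tauB_branch j y : h (S j) <= y < h j -> tauB y = 2 ^ (S j) * y - 1.
Proof.
  intros Hy. unfold tauB. rewrite (phi_branch j y Hy). rewrite Nat.iter_succ.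
  rewrite (iter_tau_branch j y Hy j) by lia. rewrite tau_big by (apply branch_at; exact Hy).
  simpl; lra.
Qed.

Lemma pow2_ge_n n : INR n <= 2 ^ n.
Proof. induction n. simpl; lra. rewrite S_INR. simpl. pose proof (pow2_pos n).
  destruct n. simpl; lra. rewrite S_INR in *. pose proof (pos_INR n). lra. Qed.

Lemma exists_h_lt y : 0 < y -> exists n, h n < y.
Proof.
  intros Hy. destruct (INR_unbounded (/ y)) as [n Hn]. exists n.
  pose proof (pow2_ge_n n). unfold h.
  assert (/ y < 2 ^ n) by lra.
  apply Rinv_lt_contravar in H0. rewrite Rinv_inv in H0. exact H0.
  apply Rmult_lt_0_compat. apply Rinv_0_lt_compat; lra. apply pow2_pos.
Qed.

Lemma branch_exists y : 0 < y < 1 -> exists j, h (S j) <= y < h j.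
Proof.
  intros Hy.
  assert (G : forall n, y < h n \/ exists j, h (S j) <= y < h j).
  { induction n. left; rewrite h_0; lra.
    destruct IHn as [H|H]; [|right; exact H].
    destruct (Rlt_or_le y (h (S n))) as [H'|H']. left; exact H'. right; exists n; lra. }
  destruct (exists_h_lt y ltac:(lra)) as [n Hn].
  destruct (G n) as [H|H]; [lra|exact H].
Qed.

Lemma tauB_range y : 0 <= y < 1 -> 0 <= tauB y < 1.
Proof.
  intros Hy. destruct (Req_dec y 0) as [->|Hn]. rewrite tauB_0; lra.
  destruct (branch_exists y ltac:(lra)) as [j Hj].
  rewrite (tauB_branch j y Hj). pose proof (branch_at j y Hj). simpl. lra.
Qed.


Definition inI (p : R * R) (x : R) : Prop := fst p < x < snd p.
Definition covers (L : list (R * R)) (E : R -> Prop) : Prop :=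
  forall x, E x -> exists p, In p L /\ inI p x.
Definition tot (L : list (R * R)) : R := fold_right (fun p acc => snd p - fst p + acc) 0 L.
Definition good (L : list (R * R)) : Prop := forall p, In p L -> fst p <= snd p.

Lemma tot_cons p L : tot (p :: L) = snd p - fst p + tot L.
Proof. reflexivity. Qed.

Lemma tot_app L1 L2 : tot (L1 ++ L2) = tot L1 + tot L2.
Proof. induction L1; simpl; [lra|]. rewrite IHL1; lra. Qed.

Lemma tot_nonneg L : good L -> 0 <= tot L.
Proof. induction L; simpl; intros G; [lra|].
  pose proof (G a (or_introl eq_refl)). assert (good L) by (intros p Hp; apply G; right; exact Hp).
  specialize (IHL H0). lra. Qed.

Lemma good_app L1 L2 : good L1 -> good L2 -> good (L1 ++ L2).
Proof. intros G1 G2 p Hp. apply in_app_or in Hp as [H|H]; auto. Qed.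

Lemma tot_flat_map {A} (f : A -> list (R*R)) (l : list A) (c : R) :
  (forall a, In a l -> tot (f a) <= c) -> tot (flat_map f l) <= INR (length l) * c.
Proof.
  induction l; intros H; cbn [flat_map length]. simpl; lra.
  rewrite tot_app. rewrite S_INR.
  assert (tot (f a) <= c) by (apply H; left; auto).
  assert (tot (flat_map f l) <= INR (length l) * c) by (apply IHl; intros; apply H; right; auto).
  lra.
Qed.

Lemma good_flat_map {A} (f : A -> list (R*R)) (l : list A) :
  (forall a, In a l -> good (f a)) -> good (flat_map f l).
Proof. intros H p Hp. apply in_flat_map in Hp as [a [Ha Hp]]. exact (H a Ha p Hp). Qed.

Definition scale (k : nat) (p : R * R) : R * R := ((1 + fst p) * h k, (1 + snd p) * h k).

Definition pull (M K : nat) (L : list (R * R)) : list (R * R) :=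
  (- h K, h K) :: flat_map (fun k => map (scale k) L) (seq M (S K - M)).

Lemma tot_map_scale k L : tot (map (scale k) L) = h k * tot L.
Proof. induction L; simpl. lra. rewrite IHL. unfold scale; simpl. ring. Qed.

Lemma tot_scales L : good L -> forall n M,
  tot (flat_map (fun k => map (scale k) L) (seq M n)) <= 2 * h M * tot L.
Proof.
  intros G. pose proof (tot_nonneg L G).
  induction n; intros M; simpl. pose proof (h_pos M). pose proof (Rmult_le_pos _ _ (Rlt_le _ _ H0) H). lra.
  rewrite tot_app, tot_map_scale. specialize (IHn (S M)). rewrite h_S in IHn. lra.
Qed.

Lemma tot_pull M K L : good L -> tot (pull M K L) <= 2 * h K + 2 * h M * tot L.
Proof. intros G. unfold pull. rewrite tot_cons. simpl fst; simpl snd. pose proof (tot_scales L G (S K - M) M). lra. Qed.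

Lemma good_pull M K L : good L -> good (pull M K L).
Proof.
  intros G p Hp. destruct Hp as [<-|Hp]. simpl. pose proof (h_pos K); lra.
  apply in_flat_map in Hp as [k [_ Hp]]. apply in_map_iff in Hp as [q [<- Hq]].
  unfold scale; simpl. pose proof (G q Hq). pose proof (h_pos k). nra.
Qed.

Lemma cover_pull M K L F : (1 <= M)%nat -> covers L F ->
  covers (pull M K L) (fun y => 0 <= y < 2 * h M /\ F (tauB y)).
Proof.
  intros HM C y [Hy HF].
  destruct (Req_dec y 0) as [E|Hn].
  { exists (- h K, h K). split. left; auto. unfold inI; simpl. pose proof (h_pos K). lra. }
  assert (Hy1 : 2 * h M <= 1). { replace M with (S (M - 1)) by lia. rewrite h_S. pose proof (h_le (M-1) 0 ltac:(lia)). rewrite h_0 in H. lra. }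
  destruct (branch_exists y ltac:(lra)) as [j Hj].
  assert (HjM : (M <= S j)%nat).
  { destruct (Compare_dec.le_lt_dec M (S j)) as [l|l]; [exact l|].
    exfalso. assert (h M <= h (S (S j))) by (apply h_le; lia). rewrite (h_S (S j)) in H. lra. }
  destruct (Compare_dec.le_lt_dec (S j) K) as [HK|HK].
  - destruct (C (tauB y) HF) as [p [Hp Hin]].
    exists (scale (S j) p). split.
    + right. apply in_flat_map. exists (S j). split. apply in_seq. lia. apply in_map. exact Hp.
    + unfold inI, scale in *; simpl. rewrite (tauB_branch j y Hj) in Hin.
      assert (E : 2 ^ S j * h (S j) = 1). { rewrite pow_h by lia. rewrite Nat.sub_diag. apply h_0. }
      pose proof (h_pos (S j)). nra.
  - exists (- h K, h K). split. left; auto. unfold inI; simpl.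
    pose proof (h_le j K ltac:(lia)). pose proof (h_pos K). lra.
Qed.

Definition iterL (K r : nat) (L : list (R*R)) := Nat.iter r (pull 1 K) L.

Lemma h_1 : 2 * h 1 = 1.
Proof. unfold h; simpl; lra. Qed.

Lemma iterL_props K L F : good L -> covers L F -> forall r,
  good (iterL K r L) /\ tot (iterL K r L) <= tot L + INR r * (2 * h K) /\
  covers (iterL K r L) (fun w => 0 <= w < 1 /\ F (Nat.iter r tauB w)).
Proof.
  intros G C. induction r.
  - simpl. split; [exact G|]. split; [lra|]. intros x [_ H]. apply C. exact H.
  - destruct IHr as [G' [T' C']]. unfold iterL. rewrite Nat.iter_succ. fold (iterL K r L).
    split; [apply good_pull; exact G'|]. split.
    + pose proof (tot_pull 1 K _ G'). rewrite h_1 in H. rewrite S_INR. lra.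
    + intros x [Hx HF]. apply (cover_pull 1 K _ _ (le_n 1) C'). rewrite h_1. split; [exact Hx|].
      split. apply tauB_range; exact Hx. rewrite <- Nat.iter_succ_r. exact HF.
Qed.


Definition LA (M : nat) : list (R*R) := (0, 2 * h M) :: nil.

Definition PL (K M i j : nat) := iterL K i (pull M K (iterL K (j - i - 1) (LA M))).

Lemma zz_range n x : 0 <= x < 1 -> 0 <= Nat.iter n tauB x < 1.
Proof. induction n; intros H; simpl. exact H. apply tauB_range. apply IHn; exact H. Qed.

Lemma good_LA M : good (LA M).
Proof. intros p [<-|[]]. simpl. pose proof (h_pos M); lra. Qed.

Lemma cover_LA M : covers (LA M) (fun w => 0 < w <= h M).
Proof. intros w Hw. exists (0, 2 * h M). split. left; auto. unfold inI; simpl. pose proof (h_pos M); lra. Qed.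

Lemma h_sq_le M : (1 <= M)%nat -> 2 * h M <= 1.
Proof. intros HM. replace M with (S (M - 1)) by lia. rewrite h_S. pose proof (h_le (M-1) 0 ltac:(lia)). rewrite h_0 in H. lra. Qed.

Lemma PL_props K M i j : (1 <= M)%nat -> (i < j)%nat ->
  good (PL K M i j) /\
  tot (PL K M i j) <= 4 * h M * h M + INR j * (2 * h K) /\
  covers (PL K M i j) (fun x => 0 <= x < 1 /\ 0 < Nat.iter i tauB x <= h M /\ 0 < Nat.iter j tauB x <= h M).
Proof.
  intros HM Hij. set (r := (j - i - 1)%nat).
  destruct (iterL_props K (LA M) _ (good_LA M) (cover_LA M) r) as [G1 [T1 C1]].
  pose proof (cover_pull M K _ _ HM C1) as C2.
  pose proof (good_pull M K _ G1) as G2.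
  pose proof (tot_pull M K _ G1) as T2.
  destruct (iterL_props K _ _ G2 C2 i) as [G3 [T3 C3]].
  unfold PL. fold r. split; [exact G3|]. split.
  - assert (tot (LA M) = 2 * h M) by (unfold LA, tot; simpl; lra).
    pose proof (h_sq_le M HM). pose proof (h_pos K). pose proof (h_pos M).
    assert (INR j = 1 + INR r + INR i). { unfold r. replace j with (1 + (j - i - 1) + i)%nat at 1 by lia. rewrite !plus_INR. simpl. lra. }
    pose proof (pos_INR r).
    assert (2 * h M * (INR r * (2 * h K)) <= INR r * (2 * h K)).
    { pose proof (Rmult_le_pos (INR r) (2 * h K) H4 ltac:(lra)). nra. }
    rewrite H in T1. nra.
  - intros x [Hx [Hi Hj]]. apply C3. split; [exact Hx|].
    pose proof (zz_range i x Hx). split. pose proof (h_pos M); lra.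
    split. apply tauB_range; lra.
    rewrite <- Nat.iter_succ_r, <- Nat.iter_add. replace (S r + i)%nat with j by (unfold r; lia). exact Hj.
Qed.

Definition BL (K M P : nat) :=
  flat_map (fun i => flat_map (fun j => if Nat.ltb i j then PL K M i j else nil) (seq 0 P)) (seq 0 P).

Lemma BL_props K M P : (1 <= M)%nat ->
  good (BL K M P) /\
  tot (BL K M P) <= INR P * (INR P * (4 * h M * h M + INR P * (2 * h K))) /\
  covers (BL K M P) (fun x => 0 <= x < 1 /\ exists i j, (i < j < P)%nat /\
      0 < Nat.iter i tauB x <= h M /\ 0 < Nat.iter j tauB x <= h M).
Proof.
  intros HM. split; [|split].
  - apply good_flat_map. intros i _. apply good_flat_map. intros j _.
    destruct (Nat.ltb_spec i j). apply (PL_props K M i j HM H). intros p [].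
  - unfold BL. eapply Rle_trans. apply tot_flat_map with (c := INR P * (4 * h M * h M + INR P * (2 * h K))).
    2:{ rewrite length_seq; lra. } intros i _. eapply Rle_trans. apply tot_flat_map with (c := 4 * h M * h M + INR P * (2 * h K)).
    2:{ rewrite length_seq; lra. } intros j Hj.
    apply in_seq in Hj.
    pose proof (h_pos K). pose proof (h_pos M).
    destruct (Nat.ltb_spec i j).
    + destruct (PL_props K M i j HM H1) as [_ [T _]].
      assert (INR j <= INR P) by (apply le_INR; lia). nra.
    + unfold tot; simpl. pose proof (pos_INR P). nra.
  - intros x [Hx [i [j [Hij [Hi Hj]]]]].
    destruct (PL_props K M i j HM ltac:(lia)) as [_ [_ C]].
    destruct (C x (conj Hx (conj Hi Hj))) as [p [Hp Hin]].
    exists p. split; [|exact Hin].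
    apply in_flat_map. exists i. split. apply in_seq; lia.
    apply in_flat_map. exists j. split. apply in_seq; lia.
    destruct (Nat.ltb_spec i j); [exact Hp| lia].
Qed.

Lemma count_two x t n : (2 <= count_big x t n)%nat ->
  exists i j, (i < j < n)%nat /\ t <= IZR (beta (S i) x) /\ t <= IZR (beta (S j) x).
Proof.
  induction n; simpl; intros H. lia.
  destruct (Rle_dec t (IZR (beta (S n) x))) as [Hb|Hb].
  - destruct (Compare_dec.le_lt_dec 2 (count_big x t n)) as [H2|H2].
    + destruct (IHn H2) as [i [j [? [? ?]]]]. exists i, j. split; [lia|auto].
    + (* count_big x t n = 1 : find one *)
      assert (G : forall m, (1 <= count_big x t m)%nat -> exists i, (i < m)%nat /\ t <= IZR (beta (S i) x)).
      { induction m; simpl; intros Hm. lia.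
        destruct (Rle_dec t (IZR (beta (S m) x))). exists m; split; [lia|auto].
        destruct (IHm ltac:(lia)) as [i [? ?]]. exists i; split; [lia|auto]. }
      destruct (G n ltac:(lia)) as [i [? ?]]. exists i, n. split; [lia|auto].
  - destruct (IHn ltac:(lia)) as [i [j [? [? ?]]]]. exists i, j. split; [lia|auto].
Qed.

Lemma beta_small x i M : 0 <= x < 1 -> 2 ^ M <= IZR (beta (S i) x) ->
  0 < Nat.iter i tauB x <= h M.
Proof.
  intros Hx Hb. unfold beta, chi in Hb. replace (S i - 1)%nat with i in Hb by lia.
  pose proof (zz_range i x Hx). set (z := Nat.iter i tauB x) in *.
  pose proof (pow2_pos M).
  destruct (Req_dec z 0) as [E|E].
  - rewrite E, Rinv_0 in Hb. rewrite (Int_part_eq 0 0) in Hb by (simpl; lra). simpl in Hb. lra.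
  - assert (0 < z) by lra. split; [lra|].
    destruct (base_Int_part (/ z)) as [Hl _].
    assert (2 ^ M <= / z) by lra.
    unfold h. apply Rinv_le_contravar in H2; [|exact H0]. rewrite Rinv_inv in H2. exact H2.
Qed.


Definition mm (s : nat) : nat := (s + s / 2 - 1)%nat.

Lemma exp_le x y : x <= y -> exp x <= exp y.
Proof. intros [H|H]. left; apply exp_increasing; exact H. rewrite H; lra. Qed.

Lemma INR_pow2 n : INR (2 ^ n) = 2 ^ n.
Proof. rewrite pow_INR. simpl INR. replace (1 + 1) with 2 by lra. reflexivity. Qed.

Lemma tn_bound s J n : (1 <= s)%nat -> (4 ^ s <= J)%nat -> (2 ^ J <= n)%nat ->
  2 ^ (J + mm s) <= tn n.
Proof.
  intros Hs HJ Hn.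
  assert (Hn' : 2 ^ J <= INR n) by (rewrite <- INR_pow2; apply le_INR; exact Hn).
  pose proof (pow2_pos J).
  assert (L1 : INR J * ln 2 <= ln (INR n)).
  { rewrite <- ln_pow by lra. destruct Hn' as [H'|H']. left; apply ln_increasing; auto. rewrite H'; lra. }
  assert (HJ' : 2 ^ (2 * s) <= INR J).
  { rewrite <- INR_pow2. apply le_INR. rewrite Nat.pow_mul_r. exact HJ. }
  pose proof ln_lt_2.
  assert (L2 : 2 ^ (2 * s - 1) <= ln (INR n)).
  { replace (2 ^ (2 * s)) with (2 * 2 ^ (2 * s - 1)) in HJ'.
    2:{ replace (2 * s)%nat with (S (2 * s - 1)) at 2 by lia. reflexivity. }
    pose proof (pow2_pos (2 * s - 1)). nra. }
  pose proof (pow2_pos (2 * s - 1)).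
  assert (R1 : Rpower (2 ^ (2 * s - 1)) (3/4) <= Rpower (ln (INR n)) (3/4)).
  { apply Rle_Rpower_l; lra. }
  assert (R2 : 2 ^ mm s <= Rpower (2 ^ (2 * s - 1)) (3/4)).
  { unfold Rpower. rewrite ln_pow by lra.
    rewrite <- (exp_ln (2 ^ mm s)) by apply pow2_pos. rewrite ln_pow by lra.
    apply exp_le.
    assert (Hq : (4 * mm s <= 3 * (2 * s - 1))%nat).
    { unfold mm. pose proof (Nat.div_mod s 2 ltac:(lia)). pose proof (Nat.mod_upper_bound s 2 ltac:(lia)). lia. }
    apply le_INR in Hq. rewrite !mult_INR in Hq.
    replace (INR 4) with 4 in Hq by (simpl; lra). replace (INR 3) with 3 in Hq by (simpl; lra).
    pose proof (ln_lt_2).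
    assert (0 <= (3 * INR (2 * s - 1) - 4 * INR (mm s)) * ln 2) by (apply Rmult_le_pos; lra).
    lra. }
  unfold tn. rewrite pow_add.
  assert (0 <= 2 ^ mm s) by (left; apply pow2_pos).
  assert (2 ^ mm s <= Rpower (ln (INR n)) (3 / 4)) by lra.
  apply Rmult_le_compat; lra.
Qed.

Definition SB (s : nat) : list (R*R) :=
  flat_map (fun J => BL (3 * J + 3 * s + 6) (J + mm s) (2 ^ (S J))) (seq (4 ^ s) (3 * 4 ^ s)).

Lemma SB_good s : (3 <= s)%nat -> good (SB s).
Proof. intros Hs. apply good_flat_map. intros J _. apply BL_props. unfold mm. pose proof (Nat.div_mod s 2 ltac:(lia)). pose proof (Nat.mod_upper_bound s 2 ltac:(lia)). lia. Qed.

Lemma SB_tot s : (3 <= s)%nat -> tot (SB s) <= 400 * h s.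
Proof.
  intros Hs. set (m := mm s).
  assert (Hm : (2 <= m)%nat) by (unfold m, mm; pose proof (Nat.div_mod s 2 ltac:(lia)); pose proof (Nat.mod_upper_bound s 2 ltac:(lia)); lia).
  set (c := 4 * h (2 * m - 2) + 2 * h (3 * s + 3)).
  unfold SB. eapply Rle_trans. apply tot_flat_map with (c := c).
  - intros J _. destruct (BL_props (3 * J + 3 * s + 6) (J + m) (2 ^ S J) ltac:(lia)) as [_ [T _]].
    eapply Rle_trans. exact T. rewrite INR_pow2.
    assert (E1 : 2 ^ S J * h (J + m) = h (m - 1)) by (rewrite pow_h by lia; f_equal; lia).
    assert (E2 : 2 ^ S J * h (3 * J + 3 * s + 6) = h (2 * J + 3 * s + 5)) by (rewrite pow_h by lia; f_equal; lia).
    assert (E3 : 2 ^ S J * h (2 * J + 3 * s + 5) = h (J + 3 * s + 4)) by (rewrite pow_h by lia; f_equal; lia).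
    assert (E4 : 2 ^ S J * h (J + 3 * s + 4) = h (3 * s + 3)) by (rewrite pow_h by lia; f_equal; lia).
    assert (E5 : h (m - 1) * h (m - 1) = h (2 * m - 2)) by (rewrite <- h_add; f_equal; lia).
    unfold c.
    replace (2 ^ S J * (2 ^ S J * (4 * h (J + m) * h (J + m) + 2 ^ S J * (2 * h (3 * J + 3 * s + 6)))))
      with (4 * ((2 ^ S J * h (J + m)) * (2 ^ S J * h (J + m))) + 2 * (2 ^ S J * (2 ^ S J * (2 ^ S J * h (3 * J + 3 * s + 6))))) by ring.
    rewrite E1, E2, E3, E4, E5. lra.
  - rewrite length_seq. rewrite mult_INR. unfold c.
    replace (INR 3) with 3 by (simpl; lra).
    replace (4 ^ s)%nat with (2 ^ (2 * s))%nat by (rewrite Nat.pow_mul_r; reflexivity).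
    rewrite INR_pow2.
    assert (A1 : 2 ^ (2 * s) * h (2 * m - 2) <= 2 ^ 5 * h s).
    { apply pow_h_le. unfold m, mm in *. pose proof (Nat.div_mod s 2 ltac:(lia)). pose proof (Nat.mod_upper_bound s 2 ltac:(lia)). lia. }
    assert (A2 : 2 ^ (2 * s) * h (3 * s + 3) <= 2 ^ 0 * h s).
    { apply pow_h_le. lia. }
    replace (2 ^ 5) with 32 in A1 by (simpl; lra). replace (2 ^ 0) with 1 in A2 by (simpl; lra). pose proof (h_pos s).
    replace (3 * 2 ^ (2 * s) * (4 * h (2 * m - 2) + 2 * h (3 * s + 3))) with (12 * (2 ^ (2 * s) * h (2 * m - 2)) + 6 * (2 ^ (2 * s) * h (3 * s + 3))) by ring.
    lra.
Qed.

Lemma SB_cover s J n x : (3 <= s)%nat -> (4 ^ s <= J < 4 ^ S s)%nat -> (2 ^ J <= n < 2 ^ S J)%nat ->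
  0 <= x < 1 -> (2 <= count_big x (tn n) n)%nat ->
  exists p, In p (SB s) /\ inI p x.
Proof.
  intros Hs HJ Hn Hx Hc.
  destruct (count_two x (tn n) n Hc) as [i [j [Hij [Hi Hj]]]].
  pose proof (tn_bound s J n ltac:(lia) ltac:(lia) ltac:(lia)).
  destruct (BL_props (3 * J + 3 * s + 6) (J + mm s) (2 ^ S J) ltac:(unfold mm; pose proof (Nat.div_mod s 2 ltac:(lia)); pose proof (Nat.mod_upper_bound s 2 ltac:(lia)); lia)) as [_ [_ C]].
  destruct (C x) as [p [Hp Hin]].
  { split; [exact Hx|]. exists i, j. split; [lia|].
    split; apply beta_small; auto; lra. }
  exists p. split; [|exact Hin]. unfold SB. apply in_flat_map. exists J. split; [|exact Hp].
  apply in_seq. simpl in HJ. lia.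
Qed.


Definition Cc (LL : nat -> list (R * R)) (n : nat) := concat (map LL (seq 0 n)).

Lemma Cc_S LL n : Cc LL (S n) = Cc LL n ++ LL n.
Proof. unfold Cc. rewrite seq_S, map_app, concat_app. simpl. rewrite app_nil_r. reflexivity. Qed.
Lemma Cc_prefix LL n n' : (n <= n')%nat -> exists r, Cc LL n' = Cc LL n ++ r.
Proof.
  induction 1. exists nil; rewrite app_nil_r; auto.
  destruct IHle as [r Hr]. exists (r ++ LL m). rewrite Cc_S, Hr, app_assoc. auto.
Qed.

Lemma Cc_len LL (LLne : forall s, (1 <= length (LL s))%nat) n : (n <= length (Cc LL n))%nat.
Proof. induction n. simpl; lia. rewrite Cc_S, length_app. pose proof (LLne n). lia. Qed.

Lemma Cc_tot LL N : tot (Cc LL (S N)) = sum_f_R0 (fun s => tot (LL s)) N.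
Proof. induction N. rewrite Cc_S, tot_app. replace (Cc LL 0) with (@nil (R*R)) by reflexivity. simpl sum_f_R0. change (tot nil) with 0. lra.
  rewrite Cc_S, tot_app, IHN. simpl. lra. Qed.

Definition d0 : R * R := (0, 0).

Lemma sum_nth_le W : good W -> forall N,
  sum_f_R0 (fun k => snd (nth k W d0) - fst (nth k W d0)) N <= tot W.
Proof.
  induction W as [|p W IH]; intros G N.
  - change (tot nil) with 0.
    rewrite (sum_eq _ (fun _ => 0)). rewrite sum_cte. lra.
    intros i _. destruct i; simpl; lra.
  - assert (GW : good W) by (intros q Hq; apply G; right; auto).
    pose proof (G p (or_introl eq_refl)). pose proof (tot_nonneg W GW).
    rewrite tot_cons. destruct N.
    + simpl. lra.
    + rewrite decomp_sum by lia. simpl pred. simpl nth at 1 2.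
      specialize (IH GW N). simpl in IH |- *. lra.
Qed.

Lemma geom_sum c s0 : 0 <= c -> forall N,
  sum_f_R0 (fun s => c * h (s0 + s)) N <= 2 * c * h s0 - 2 * c * h (s0 + S N).
Proof.
  intros Hc. induction N.
  - simpl. rewrite Nat.add_0_r. replace (s0 + 1)%nat with (S s0) by lia. rewrite h_S. lra.
  - simpl sum_f_R0. replace (s0 + S (S N))%nat with (S (s0 + S N)) by lia. rewrite h_S. lra.
Qed.

Theorem mainTheorem12 :
  lebesgue_null
    (fun x => 0 <= x < 1 /\
       forall N : nat, exists n : nat,
         (N <= n)%nat /\ (2 <= count_big x (tn n) n)%nat).
Proof.
  intros eps Heps.
  destruct (exists_h_lt (eps / 800) ltac:(lra)) as [n0 Hn0].
  set (s0 := (n0 + 3)%nat).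
  assert (Hs0 : 800 * h s0 <= eps) by (pose proof (h_le s0 n0 ltac:(unfold s0; lia)); lra).
  set (LL := fun s => d0 :: SB (s0 + s)).
  assert (LLne : forall s, (1 <= length (LL s))%nat) by (intros; simpl; lia).
  assert (LLgood : forall s, good (LL s)).
  { intros s p [<-|Hp]. unfold d0; simpl; lra. apply (SB_good (s0 + s)); [unfold s0; lia| exact Hp]. }
  set (sk := fun k => nth k (Cc LL (S k)) d0).
  assert (Hsk : forall N k, (k <= N)%nat -> sk k = nth k (Cc LL (S N)) d0).
  { intros N k Hk. unfold sk. destruct (Cc_prefix LL (S k) (S N) ltac:(lia)) as [r Hr]. rewrite Hr.
    rewrite app_nth1; auto. pose proof (Cc_len LL LLne (S k)). lia. }
  assert (Ggood : forall n, good (Cc LL n)).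
  { intros n p Hp. unfold Cc in Hp. apply in_concat in Hp as [l [Hl Hp]].
    apply in_map_iff in Hl as [s [<- _]]. exact (LLgood s p Hp). }
  exists (fun k => fst (sk k)), (fun k => snd (sk k)).
  split; [|split].
  - intros k. unfold sk. destruct (nth_in_or_default k (Cc LL (S k)) d0) as [H|H].
    apply (Ggood _ _ H). rewrite H. unfold d0; simpl; lra.
  - intros x [Hx Hbad].
    destruct (Hbad (2 ^ (4 ^ s0))%nat) as [n [Hn Hc]].
    assert (Hn0' : (0 < n)%nat) by (pose proof (Nat.pow_nonzero 2 (4 ^ s0) ltac:(lia)); lia).
    set (J := Nat.log2 n).
    pose proof (Nat.log2_spec n Hn0') as HJn. fold J in HJn.
    assert (HJ : (4 ^ s0 <= J)%nat).
    { pose proof (Nat.log2_le_mono _ _ Hn). rewrite Nat.log2_pow2 in H by lia. exact H. }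
    assert (HJ0 : (0 < J)%nat) by (pose proof (Nat.pow_nonzero 4 s0 ltac:(lia)); lia).
    set (L := Nat.log2 J).
    pose proof (Nat.log2_spec J HJ0) as HLJ. fold L in HLJ.
    set (s := (L / 2)%nat).
    pose proof (Nat.div_mod L 2 ltac:(lia)) as DM. pose proof (Nat.mod_upper_bound L 2 ltac:(lia)) as MU.
    fold s in DM.
    assert (E4 : forall t, (4 ^ t = 2 ^ (2 * t))%nat) by (intros; rewrite Nat.pow_mul_r; reflexivity).
    assert (HsJ : (4 ^ s <= J < 4 ^ S s)%nat).
    { rewrite !E4. split.
      - eapply Nat.le_trans; [|apply HLJ]. apply Nat.pow_le_mono_r; lia.
      - eapply Nat.lt_le_trans; [apply HLJ|]. apply Nat.pow_le_mono_r; lia. }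
    assert (Hss0 : (s0 <= s)%nat).
    { assert (Nat.log2 (4 ^ s0) <= L)%nat by (apply Nat.log2_le_mono; exact HJ).
      rewrite E4, Nat.log2_pow2 in H by lia. lia. }
    destruct (SB_cover s J n x ltac:(unfold s0 in *; lia) HsJ HJn Hx Hc) as [p [Hp Hin]].
    set (t := (s - s0)%nat).
    assert (HpL : In p (LL t)) by (unfold LL, t; right; replace (s0 + (s - s0))%nat with s by lia; exact Hp).
    destruct (In_nth _ _ d0 HpL) as [q [Hq Hqp]].
    exists (length (Cc LL t) + q)%nat.
    assert (Hk : sk (length (Cc LL t) + q)%nat = p).
    { unfold sk. pose proof (Cc_len LL LLne t).
      destruct (Cc_prefix LL (S t) (S (length (Cc LL t) + q)) ltac:(lia)) as [r Hr]. rewrite Hr, Cc_S.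
      rewrite <- app_assoc, app_nth2 by lia. replace (length (Cc LL t) + q - length (Cc LL t))%nat with q by lia.
      rewrite app_nth1 by exact Hq. exact Hqp. }
    rewrite Hk. exact Hin.
  - intros N.
    rewrite (sum_eq _ (fun k => snd (nth k (Cc LL (S N)) d0) - fst (nth k (Cc LL (S N)) d0))).
    2:{ intros i Hi. rewrite (Hsk N i Hi). reflexivity. }
    eapply Rle_trans. apply sum_nth_le, Ggood.
    rewrite Cc_tot.
    eapply Rle_trans. apply sum_Rle with (An := fun s => tot (LL s)) (Bn := fun s => 400 * h (s0 + s)).
    + intros s _. unfold LL. rewrite tot_cons. unfold d0; simpl fst; simpl snd.
      pose proof (SB_tot (s0 + s) ltac:(unfold s0; lia)). lra.
    + pose proof (geom_sum 400 s0 ltac:(lra) N). pose proof (h_pos (s0 + S N)). lra.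
Qed.
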